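(* Let $\Delta\in\mathbb F^{m\times m}$ be a connection matrix with column/row partition $J_0,\dots,J_b$. Let $\widetilde\Delta^{m-1}$ be the last matrix produced by the Row Cancellation Algorithm (RCA) applied to $\Delta$, and let $\widetilde\Delta(1)^{m-1},\dots,\widetilde\Delta(b)^{m-1}$ be the matrices produced by the Block Sequential Row Cancellation Algorithm applied to $\Delta$. Then $\widetilde\Delta^{m-1}_{J_{k-1}J_k}=\widetilde\Delta(k)^{m-1}_{J_{k-1}J_k}$ for $k=1,\dots,b$, and the set of positions marked as primary pivots in the RCA run on $\Delta$ equals the union over $k$ of the sets of positions marked as primary pivots in the RCA runs on $\widetilde\Delta(k)$.
   Context: Throughout, $\mathbb F$ is a field and $m\ge1$. $A_{IJ}$ is the submatrix of $A$ with rows in $I$ and columns in $J$. $U^{pq}$ is the $m\times m$ matrix whose only nonzero entry is a $1$ in position $(p,q)$. Superscripts on matrices are indices, not powers. A connection matrix (over $\mathbb F$) is a matrix $\Delta\in\mathbb F^{m\times m}$ together with a partition $\{1,\dots,m\}=J_0\sqcup\cdots\sqcup J_b$ (the column/row partition; the $J_k$ need not consist of consecutive integers) such that $\Delta$ is upper triangular, $\Delta\Delta=0$, and $\Delta_{ij}=0$ unless $i<j$ and $(i,j)\in\bigcup_{k=1}^bJ_{k-1}\times J_k$. For $1\le r\le m-1$ the $r$-th diagonal is $\{(j-r,j):r<j\le m\}$. Row Cancellation Algorithm (RCA) applied to a connection matrix $\Delta$: set $\widetilde\Delta^0=\widetilde\Delta^1=\Delta$. For $r=1,\dots,m-1$ in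 turn: (Markup) mark permanently as a primary pivot every position $(j-r,j)$ on the $r$-th diagonal with $\widetilde\Delta^r_{j-r,j}\ne0$ such that no position of column $j$ was marked as a primary pivot at an earlier iteration. (Update, only for $r\le m-2$) If no position was marked at iteration $r$, put $\widetilde T^r=I$; otherwise let $j_1<\cdots<j_t$ be the columns of the positions marked at iteration $r$, let $\widetilde T^{r,s}=I-\sum_{q=j_s+1}^m\frac{\widetilde\Delta^r_{j_s-r,q}}{\widetilde\Delta^r_{j_s-r,j_s}}U^{j_sq}$ and $\widetilde T^r=\widetilde T^{r,1}\cdots\widetilde T^{r,t}$. Set $\widetilde\Delta^{r+1}=(\widetilde T^r)^{-1}\widetilde\Delta^r\widetilde T^r$. Block Sequential Row Cancellation Algorithm applied to $\Delta$: set $\widetilde{\mathcal J}_0=\emptyset$. For $k=1,\dots,b$ in turn: let $\widetilde\Delta(k)$ be the matrix that agrees with $\Delta$ at the positions in $(J_{k-1}\setminus\widetilde{\mathcal J}_{k-1})\times J_k$ and is zero elsewhere (a connection matrix with the same partition); apply RCA to $\widetilde\Delta(k)$, obtaining $\widetilde\Delta(k)^0,\dots,\widetilde\Delta(k)^{m-1}$; let $\widetilde{\mathcal J}_k$ be the set of indices of columns containing primary pivot positions in this run. *)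

(* Defs.v *)
From HB Require Import structures.
From mathcomp Require Import all_boot all_order all_algebra.
Set Implicit Arguments. Unset Strict Implicit. Unset Printing Implicit Defensive.
Import GRing.Theory.
Local Open Scope ring_scope.

(* Indices are 0-based: 'I_m = {0,...,m-1} stands for {1,...,m}.
   The partition J_0,...,J_b is encoded by a block map blk : 'I_m -> nat,
   J_k = {i | blk i = k}. *)

Definition dsub (m : nat) (j : 'I_m) (r : nat) : 'I_m :=
  Ordinal (leq_ltn_trans (leq_subr r j) (ltn_ord j)).

Definition Umx (F : fieldType) (m : nat) (p q : 'I_m) : 'M[F]_m :=
  \matrix_(i, j) ((i == p) && (j == q))%:R.

Definition is_partition (m b : nat) (blk : 'I_m -> nat) : Prop :=
  (forall i, (blk i <= b)%N) /\ (forall k, (k <= b)%N -> exists i, blk i = k).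

Definition connection_matrix (F : fieldType) (m b : nat) (blk : 'I_m -> nat)
    (D : 'M[F]_m) : Prop :=
  is_partition b blk /\
  (forall i j : 'I_m, (j < i)%N -> D i j = 0) /\
  D *m D = 0 /\
  (forall i j : 'I_m, D i j != 0 -> (i < j)%N /\ (1 <= blk j)%N /\ blk i = (blk j).-1).

Definition Trs (F : fieldType) (m : nat) (D : 'M[F]_m) (r : nat) (js : 'I_m)
    : 'M[F]_m :=
  1%:M - \sum_(q : 'I_m | (js < q)%N) (D (dsub js r) q / D (dsub js r) js) *: @Umx F m js q.

(* state of RCA: current matrix and list of primary pivot positions (row, col) *)
Definition rca_state (F : fieldType) (m : nat) := ('M[F]_m * seq ('I_m * 'I_m))%type.

Definition marked_cols (F : fieldType) (m : nat) (r : nat) (st : rca_state F m)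
    : seq 'I_m :=
  [seq j : 'I_m <- enum 'I_m | [&& (r <= j)%N, st.1 (dsub j r) j != 0 &
                             j \notin map snd st.2]].

Definition rca_step (F : fieldType) (m : nat) (st : rca_state F m) (r : nat)
    : rca_state F m :=
  let D := st.1 in
  let js := marked_cols r st in
  let P' := st.2 ++ map (fun j => (dsub j r, j)) js in
  let T := foldr (fun j M => Trs D r j *m M) 1%:M js in
  let D' := if (r <= m - 2)%N && (js != [::]) then invmx T *m D *m T else D in
  (D', P').

Definition rca_run (F : fieldType) (m : nat) (D : 'M[F]_m) : rca_state F m :=
  foldl (@rca_step F m) (D, [::]) (iota 1 (m - 1)).

Definition rca_final (F : fieldType) (m : nat) (D : 'M[F]_m) : 'M[F]_m :=
  (rca_run D).1.

Definition rca_pivots (F : fieldType) (m : nat) (D : 'M[F]_m) : {set 'I_m * 'I_m} :=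
  [set p | p \in (rca_run D).2].

Definition rca_pivot_cols (F : fieldType) (m : nat) (D : 'M[F]_m) : {set 'I_m} :=
  [set j | j \in map snd (rca_run D).2].

Definition bs_input (F : fieldType) (m : nat) (blk : 'I_m -> nat) (D : 'M[F]_m)
    (k : nat) (Jprev : {set 'I_m}) : 'M[F]_m :=
  \matrix_(i, j) (if [&& blk i == k.-1, i \notin Jprev & blk j == k] then D i j else 0).

Fixpoint bs_cols (F : fieldType) (m : nat) (blk : 'I_m -> nat) (D : 'M[F]_m)
    (k : nat) : {set 'I_m} :=
  match k with
  | 0 => set0
  | k'.+1 => rca_pivot_cols (bs_input blk D k'.+1 (bs_cols blk D k'))
  end.

Definition bs_matrix (F : fieldType) (m : nat) (blk : 'I_m -> nat) (D : 'M[F]_m)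
    (k : nat) : 'M[F]_m :=
  bs_input blk D k (bs_cols blk D k.-1).

(* Main.v *)
Require Import Defs.
From HB Require Import structures.
From mathcomp Require Import all_boot all_order all_algebra.
From mathcomp Require Import zify.
Set Implicit Arguments. Unset Strict Implicit. Unset Printing Implicit Defensive.
Import GRing.Theory.
Local Open Scope ring_scope.

Section Gen.
Variables (F : fieldType) (m : nat) (blk : 'I_m -> nat).
Implicit Types (A B X Y M : 'M[F]_m).

Lemma mulmx_nz_ex A B i j : (A *m B) i j != 0 -> exists k, A i k != 0 /\ B k j != 0.
Proof.
move=> H; case: (pickP (fun k => (A i k != 0) && (B k j != 0))) => [k /andP[]|H0].
  by exists k.
move: H; rewrite mxE big1 ?eqxx // => k _; move: (H0 k) => /negbT.
by rewrite negb_and !negbK => /orP[]/eqP->; rewrite ?mul0r ?mulr0.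
Qed.

Lemma oltF (i j : 'I_m) : (i < j)%N -> (i == j) = false.
Proof. by move=> h; apply/eqP => E; rewrite E ltnn in h. Qed.
Lemma ogtF (i j : 'I_m) : (j < i)%N -> (i == j) = false.
Proof. by move=> h; apply/eqP => E; rewrite E ltnn in h. Qed.

Definition good (S : pred 'I_m) M :=
  [/\ forall i l : 'I_m, ~~ S i -> M i l = (i == l)%:R,
      forall i l : 'I_m, (l <= i)%N -> M i l = (i == l)%:R &
      forall i l : 'I_m, M i l != 0 -> blk i = blk l].

Lemma row_unit_mul A B i l : (forall k, A i k = (i == k)%:R) -> (A *m B) i l = B i l.
Proof.
move=> H; rewrite mxE (bigD1 i) //= H eqxx mul1r big1 ?addr0 // => k /negbTE ki.
by rewrite H eq_sym ki mul0r.
Qed.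

Lemma good_upper S M i l : good S M -> M i l != 0 -> (i <= l)%N.
Proof.
case=> _ H2 _ nz; case: (leqP i l) => // li.
have/negbTE il: i != l by apply/eqP => E; rewrite E ltnn in li.
by move: nz; rewrite (H2 i l (ltnW li)) il eqxx.
Qed.

Lemma good_mul S A B : good S A -> good S B -> good S (A *m B).
Proof.
move=> gA gB; have [A1 A2 A3] := gA; have [B1 B2 B3] := gB; split.
- move=> i l Si; rewrite row_unit_mul; last by move=> k; rewrite A1.
  by rewrite B1.
- move=> i l li; rewrite mxE (bigD1 i) //= A2 // eqxx mul1r big1 ?addr0 ?B2 //.
  move=> k ki; case: (ltnP k i) => [ki'|ik].
    by rewrite A2 ?(ltnW ki') // (ogtF ki') mul0r.
  have ik' : (i < k)%N by rewrite ltn_neqAle eq_sym ki.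
  rewrite (B2 k l) ?mulr0 ?(leq_trans li (ltnW ik')) //.
  by rewrite (ogtF (leq_ltn_trans li ik')) mulr0.
- move=> i l /mulmx_nz_ex [k [h1 h2]]; by rewrite (A3 _ _ h1) (B3 _ _ h2).
Qed.

Lemma good1 S : good S 1%:M.
Proof.
split.
- by move=> i l _; rewrite mxE.
- by move=> i l _; rewrite mxE.
- by move=> i l; rewrite mxE; case: (eqVneq i l) => [->//|_]; rewrite eqxx.
Qed.

Lemma good_sub S S' M : {subset S <= S'} -> good S M -> good S' M.
Proof.
move=> sub [H1 H2 H3]; split=> // i l Si; apply: H1; apply: contra Si; exact: sub.
Qed.

Lemma good_row_same S M X (i q : 'I_m) : good S M ->
  (forall l : 'I_m, S l -> (l < q)%N -> X i l = 0) -> (X *m M) i q = X i q.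
Proof.
case=> H1 H2 _ H; rewrite mxE (bigD1 q) //= H2 // eqxx mulr1 big1 ?addr0 // => l lq.
case Sl: (S l).
  case: (ltnP l q) => [lq'|ql]; first by rewrite H // mul0r.
  by rewrite H2 // (negbTE lq) mulr0.
by rewrite H1 ?Sl // (negbTE lq) mulr0.
Qed.

(* upper-triangular left factor kills *)
Lemma good_left_zero S M Y (i q : 'I_m) : good S M ->
  (forall l : 'I_m, (i <= l)%N -> Y l q = 0) -> (M *m Y) i q = 0.
Proof.
move=> gM H; rewrite mxE big1 // => l _.
case: (eqVneq (M i l) 0) => [->|nz]; first by rewrite mul0r.
by rewrite H ?mulr0 // (good_upper gM nz).
Qed.

Definition Tfac (c : 'I_m -> F) (j : 'I_m) : 'M[F]_m :=
  \matrix_(i, l) ((i == l)%:R - ((i == j) && (j < l)%N)%:R * c l).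

Definition Nfac (c : 'I_m -> F) (j : 'I_m) : 'M[F]_m :=
  \matrix_(i, l) (((i == j) && (j < l)%N)%:R * c l).

Lemma TfacE c j : Tfac c j = 1%:M - Nfac c j.
Proof. by apply/matrixP=> i l; rewrite !mxE. Qed.

Lemma Nfac_mul c c' j : Nfac c j *m Nfac c' j = 0.
Proof.
apply/matrixP=> i l; rewrite !mxE big1 // => k _; rewrite !mxE.
case: (eqVneq i j) => [_|]; last by rewrite /= mul0r mul0r.
case: (eqVneq k j) => [->|]; first by rewrite ltnn /= !mul0r.
by rewrite /= !(mul0r, mulr0).
Qed.

Lemma Tfac_inv c j : Tfac c j *m Tfac (fun l => - c l) j = 1%:M.
Proof.
have -> : Tfac (fun l => - c l) j = 1%:M + Nfac c j.
  by apply/matrixP=> i l; rewrite !mxE mulrN opprK.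
rewrite TfacE mulmxBl mulmxDr !mul1mx mulmxDr mulmx1 Nfac_mul addr0.
by rewrite addrK.
Qed.

Lemma Tfac_good c j : (forall l, c l != 0 -> blk l = blk j) -> good (pred1 j) (Tfac c j).
Proof.
move=> Hc; split.
- by move=> i l /= ij; rewrite mxE (negbTE ij) /= mul0r subr0.
- move=> i l li; rewrite mxE; case: (eqVneq i j) => [ij|]; last by rewrite /= mul0r subr0.
  by rewrite ij /= ltnNge -ij li /= mul0r subr0.
- move=> i l; rewrite mxE; case: (eqVneq i j) => [->|ij].
    case: (eqVneq j l) => [->//|jl]; rewrite /= sub0r oppr_eq0.
    by case: (j < l)%N; rewrite ?mul0r ?eqxx // mul1r => /Hc ->.
  rewrite /= mul0r subr0; case: (eqVneq i l) => [->//|_]; by rewrite eqxx.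
Qed.

Lemma mul_Tfac Y c j (i q : 'I_m) : (Y *m Tfac c j) i q = Y i q - Y i j * ((j < q)%N%:R * c q).
Proof.
rewrite TfacE mulmxBr mulmx1 !mxE; congr (_ - _).
rewrite (bigD1 j) //= !mxE eqxx /= big1 ?addr0 // => l lj; rewrite mxE (negbTE lj) /=.
by rewrite mul0r mulr0.
Qed.

End Gen.


Section T.
Variables (F : fieldType) (m : nat) (blk : 'I_m -> nat).
Implicit Types (A B X Y M D : 'M[F]_m).

Definition patt D := forall i j : 'I_m, D i j != 0 ->
  (i < j)%N /\ (1 <= blk j)%N /\ blk i = (blk j).-1.

Definition coef D (r : nat) (j : 'I_m) (l : 'I_m) : F := D (dsub j r) l / D (dsub j r) j.

Lemma TrsE D r j : Trs D r j = Tfac (coef D r j) j.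
Proof.
apply/matrixP => i l; rewrite !mxE summxE; congr (_ - _).
case: (eqVneq i j) => [->|ij]; last first.
  by rewrite /= mul0r big1 // => q _; rewrite !mxE (negbTE ij) /= mulr0.
case: (ltnP j l) => jl /=.
  rewrite (bigD1 l) //= !mxE !eqxx mulr1 mul1r big1 ?addr0 // => q /andP[_ ql].
  by rewrite !mxE eqxx eq_sym (negbTE ql) mulr0.
rewrite mul0r big1 // => q jq; rewrite !mxE eqxx /=.
case: (eqVneq l q) => [lq|]; last by rewrite mulr0.
by move: jq; rewrite -lq ltnNge jl.
Qed.

Lemma coef_blk D r j l : patt D -> coef D r j l != 0 -> blk l = blk j.
Proof.
move=> pD; rewrite /coef mulf_eq0 negb_or invr_eq0 => /andP[/pD [_ [h1 h2]] /pD [_ [h3 h4]]].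
by move: h2 h4 h1 h3; case: (blk l) => // a; case: (blk j) => // b /= -> -> _ _.
Qed.

Definition Tprod D r (js : seq 'I_m) := foldr (fun j M => Trs D r j *m M) 1%:M js.
Definition Tinvp D r (js : seq 'I_m) :=
  foldr (fun j M => M *m Tfac (fun l => - coef D r j l) j) 1%:M js.

Lemma Tprod_inv D r js : Tprod D r js *m Tinvp D r js = 1%:M.
Proof.
elim: js => [|j js IH] /=; first by rewrite mulmx1.
by rewrite -mulmxA (mulmxA (Tprod D r js)) IH mul1mx TrsE Tfac_inv.
Qed.

Lemma Tprod_unit D r js : Tprod D r js \in unitmx.
Proof. by case: (mulmx1_unit (Tprod_inv D r js)). Qed.

Lemma invmx_Tprod D r js : invmx (Tprod D r js) = Tinvp D r js.
Proof.
by rewrite -[invmx _]mulmx1 -(Tprod_inv D r js) mulmxA mulVmx ?mul1mx // Tprod_unit.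
Qed.

Lemma good_Tprod D r js : patt D -> good blk (mem js) (Tprod D r js).
Proof.
move=> pD; elim: js => [|j js IH] /=; first exact: good1.
apply: good_mul.
  apply: (@good_sub _ _ _ (pred1 j)); first by move=> x /= /eqP->; rewrite inE eqxx.
  rewrite TrsE; apply: Tfac_good => l; exact: coef_blk.
by apply: good_sub IH => x xs; rewrite inE xs orbT.
Qed.

Lemma good_Tinvp D r js : patt D -> good blk (mem js) (Tinvp D r js).
Proof.
move=> pD; elim: js => [|j js IH] /=; first exact: good1.
apply: good_mul.
  by apply: good_sub IH => x xs; rewrite inE xs orbT.
apply: (@good_sub _ _ _ (pred1 j)); first by move=> x /= /eqP->; rewrite inE eqxx.
apply: Tfac_good => l; rewrite oppr_eq0; exact: coef_blk.
Qed.

Lemma good_invT D r js : patt D -> good blk (mem js) (invmx (Tprod D r js)).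
Proof. by move=> pD; rewrite invmx_Tprod; apply: good_Tinvp. Qed.

Lemma patt_conj D r js : patt D ->
  patt (invmx (Tprod D r js) *m D *m Tprod D r js).
Proof.
move=> pD i l /mulmx_nz_ex [b [/mulmx_nz_ex [a [h1 h2]] h3]].
have gI := good_invT r js pD; have gT := good_Tprod r js pD.
have u1 := good_upper gI h1; have u3 := good_upper gT h3.
have [_ _ b1] := gI; have [_ _ b3] := gT.
have [ab [hb hab]] := pD _ _ h2.
split; first by apply: leq_ltn_trans u1 (leq_trans ab u3).
by rewrite -(b3 _ _ h3) (b1 _ _ h1).
Qed.

Lemma sq_conj D r js : D *m D = 0 ->
  (invmx (Tprod D r js) *m D *m Tprod D r js) *m (invmx (Tprod D r js) *m D *m Tprod D r js) = 0.
Proof.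
move=> DD; rewrite !mulmxA -(mulmxA _ _ (invmx _)) mulmxV ?Tprod_unit // mulmx1.
by rewrite -(mulmxA _ D D) DD mulmx0 mul0mx.
Qed.

Lemma Tprod_cat D r s1 s2 : Tprod D r (s1 ++ s2) = Tprod D r s1 *m Tprod D r s2.
Proof.
elim: s1 => [|j s IH] /=; first by rewrite mul1mx.
by rewrite IH mulmxA.
Qed.

End T.


Definition oltr (m : nat) : rel 'I_m := fun x y => (x < y)%N.

Lemma oltr_trans m : transitive (@oltr m).
Proof. by move=> y x z; rewrite /oltr; apply: ltn_trans. Qed.

Lemma split_sorted m (s : seq 'I_m) x : sorted (@oltr m) s -> x \in s ->
  s = [seq y : 'I_m <- s | (y < x)%N] ++ x :: [seq y : 'I_m <- s | (x < y)%N].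
Proof.
elim: s => [//|y s IH] /= Hs; rewrite inE.
have [Hall Hs'] : all (oltr y) s /\ sorted (@oltr m) s.
  by move: Hs; rewrite (path_sortedE (@oltr_trans m)) => /andP[].
case: (eqVneq x y) => [->|xy] /=; last first.
  move=> xs; have yx : (y < x)%N by move/allP: Hall => /(_ x xs).
  rewrite yx ltnNge (ltnW yx) /=; congr (_ :: _); exact: IH.
move=> _.
  rewrite ltnn; have -> : [seq y0 : 'I_m <- s | (y0 < y)%N] = [::].
    apply/eqP; rewrite -[_ == _]negbK -has_filter; apply/hasPn => z zs.
    by move/allP: Hall => /(_ z zs) h; rewrite -leqNgt ltnW.
  have -> : [seq y0 : 'I_m <- s | (y < y0)%N] = s.
    by apply/all_filterP.
  by [].
Qed.

Lemma marked_sorted (F : fieldType) m r (st : rca_state F m) :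
  sorted (@oltr m) (marked_cols r st).
Proof.
apply: sorted_filter; first exact: oltr_trans.
have := val_enum_ord m; move=> h.
have : sorted ltn [seq val i | i <- enum 'I_m] by rewrite h iota_ltn_sorted.
by rewrite sorted_map.
Qed.

Section Inv.
Variables (F : fieldType) (m : nat) (blk : 'I_m -> nat).

Record inv (r : nat) (D : 'M[F]_m) (P : seq ('I_m * 'I_m)) : Prop := Inv {
  I0 : patt blk D;
  I1 : D *m D = 0;
  I2 : forall a j, (a, j) \in P -> D a j != 0;
  I3 : forall a j q, (a, j) \in P -> q != j -> D a q != 0 -> q \in map snd P;
  I4 : forall j q, j \in map snd P -> D j q = 0;
  I5 : forall a q : 'I_m, (a < q)%N -> (q < a + r)%N -> q \notin map snd P -> D a q = 0;
  I7 : forall a j (q : 'I_m), (a, j) \in P -> (a < q)%N -> D q j = 0;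
  I8 : forall a j, (a, j) \in P -> (j < a + r)%N }.

Section Step.
Variables (r : nat) (D : 'M[F]_m) (P : seq ('I_m * 'I_m)).
Hypothesis (H : inv r D P) (r1 : (1 <= r)%N).
Let js := marked_cols r (D, P).
Let C := map snd P.

Lemma markedP j : (j \in js) = [&& (r <= j)%N, D (dsub j r) j != 0 & j \notin C].
Proof. by rewrite mem_filter mem_enum andbT. Qed.

Lemma dsubE (j : 'I_m) : nat_of_ord (dsub j r) = (j - r)%N.
Proof. by []. Qed.

Lemma strict (i j : 'I_m) : (j <= i)%N -> D i j = 0.
Proof.
move=> ji; case: (eqVneq (D i j) 0) => // /(I0 H) [ij _].
by move: (leq_trans ij ji); rewrite ltnn.
Qed.

Lemma key_contra (x y : 'I_m) : (r <= x)%N -> D (dsub x r) x != 0 -> D x y != 0 ->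
  (forall q : 'I_m, (x < q)%N -> D q y = 0) -> False.
Proof.
move=> rx h1 h2 h3; have := I1 H; move/matrixP => /(_ (dsub x r) y).
rewrite !mxE (bigD1 x) //= big1 ?addr0.
  by move/eqP; rewrite mulf_eq0 (negbTE h1) (negbTE h2).
move=> q qx; case: (ltnP x q) => [xq|qx']; first by rewrite (h3 q xq) mulr0.
case: (eqVneq (D (dsub x r) q) 0) => [->|nz]; first by rewrite mul0r.
have [aq _] := I0 H nz.
case qC: (q \in C); first by rewrite (I4 H _ qC) mulr0.
have qlt : (q < x)%N by rewrite ltn_neqAle qx' andbT; apply: contra qx => /eqP E; apply/eqP/val_inj.
rewrite (I5 H aq) ?qC ?mul0r //.
by rewrite dsubE subnK.
Qed.

Lemma js_notC s : s \in js -> s \notin C.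
Proof. by rewrite markedP => /and3P[]. Qed.

Lemma js_nz s : s \in js -> D (dsub s r) s != 0.
Proof. by rewrite markedP => /and3P[]. Qed.

Lemma js_ge s : s \in js -> (r <= s)%N.
Proof. by rewrite markedP => /and3P[]. Qed.

Lemma col_js_below s (l : 'I_m) : s \in js -> (dsub s r < l)%N -> D l s = 0.
Proof.
move=> sj al; case: (leqP s l) => [sl|ls]; first exact: strict.
apply: (I5 H ls); last exact: js_notC.
by rewrite -{1}(subnK (js_ge sj)) ltn_add2r.
Qed.

Lemma m1 s : s \in js -> dsub s r \notin js.
Proof.
move=> sj; apply/negP => aj.
apply: (key_contra (js_ge aj) (js_nz aj) (js_nz sj)) => q aq.
exact: col_js_below.
Qed.

Lemma m2 a j0 : (a, j0) \in P -> a \notin js.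
Proof.
move=> aP; apply/negP => aj.
apply: (key_contra (js_ge aj) (js_nz aj) (I2 H aP)) => q aq.
exact: (I7 H aP).
Qed.

Lemma inC a j0 : (a, j0) \in P -> j0 \in C.
Proof. by move=> aP; apply/mapP; exists (a, j0). Qed.


Let T := Tprod D r js.

Lemma gT : good blk (mem js) T.
Proof. exact: good_Tprod (I0 H). Qed.

Lemma gI : good blk (mem js) (invmx T).
Proof. exact: good_invT (I0 H). Qed.

Lemma rowD' i q : i \notin js -> (invmx T *m D *m T) i q = (D *m T) i q.
Proof.
move=> ij; rewrite -mulmxA; apply: row_unit_mul => k; have [h _ _] := gI; exact: h.
Qed.

Lemma R3 s q : s \in js ->
  (D *m T) (dsub s r) q = if (s < q)%N then 0 else D (dsub s r) q.
Proof.
move=> sj; have E : js = _ := split_sorted (marked_sorted r (D, P)) sj.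
rewrite /T E Tprod_cat /=.
rewrite !mulmxA.
set pre := [seq y : 'I_m <- _ | _]; set post := [seq y : 'I_m <- _ | _].
set a := dsub s r.
have row1 : forall q, (D *m Tprod D r pre) a q = D a q.
  move=> q'; apply: (good_row_same (good_Tprod r pre (I0 H))) => l.
  rewrite /= mem_filter => /andP[ls lj] _.
  case: (leqP l a) => [la|al]; first exact: strict.
  apply: (I5 H al); last exact: js_notC.
  by rewrite /a dsubE subnK // js_ge.
have row2 : forall q, (D *m Tprod D r pre *m Trs D r s) a q =
    if (s < q)%N then 0 else D a q.
  move=> q'; rewrite TrsE mul_Tfac !row1 /coef -/a.
  case: (s < q')%N.
    by rewrite mul1r mulrCA mulfV ?mulr1 ?subrr // js_nz.
  by rewrite mul0r mulr0 subr0.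
rewrite (good_row_same (good_Tprod r post (I0 H))) ?row2 // => l.
by rewrite /= mem_filter => /andP[sl _] _; rewrite row2 sl.
Qed.

Lemma D_K5 (l q : 'I_m) : q \notin C -> q \notin js -> (q <= l + r)%N -> D l q = 0.
Proof.
move=> qC qj qlr.
case: (leqP q l) => [ql|lq]; first exact: strict.
case: (ltnP q (l + r)) => [qlr'|lrq]; first exact: (I5 H lq).
have qe : q = (l + r)%N :> nat by apply/eqP; rewrite eqn_leq qlr lrq.
case: (eqVneq (D l q) 0) => // nz; move: qj; rewrite markedP qC andbT.
have rq : (r <= q)%N by rewrite qe leq_addl.
have -> : dsub q r = l by apply: val_inj; rewrite /= qe addnK.
by rewrite rq nz.
Qed.

Lemma DT_K5 (l q : 'I_m) : q \notin C -> q \notin js -> (q <= l + r)%N -> (D *m T) l q = 0.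
Proof.
move=> qC qj qlr.
rewrite (good_row_same gT); first exact: D_K5.
move=> p /= pj pq; case: (leqP p l) => [pl|lp]; first exact: strict.
apply: (I5 H lp); last exact: js_notC.
exact: leq_trans pq qlr.
Qed.

Lemma DT_K7 (a y : 'I_m) : (forall l : 'I_m, (a < l)%N -> D l y = 0) -> (y <= a + r)%N ->
  forall l : 'I_m, (a < l)%N -> (D *m T) l y = 0.
Proof.
move=> hy ya l al; rewrite mxE big1 // => p _.
case: (eqVneq p y) => [->|py]; first by rewrite hy ?mul0r.
case: (eqVneq (T p y) 0) => [->|nz]; first by rewrite mulr0.
have pj : p \in js.
  apply: contraT => pj; move: nz; have [h _ _] := gT; rewrite h //.
  by rewrite (negbTE py) eqxx.
have pY : (p < y)%N by rewrite ltn_neqAle (good_upper gT nz) andbT; apply: contra py => /eqP E; apply/eqP/val_inj.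
case: (leqP p l) => [pl|lp]; first by rewrite strict ?mul0r.
case: (ltnP p (l + r)) => [plr|lrp].
  by rewrite (I5 H lp plr) ?mul0r // js_notC.
have : (l + r < a + r)%N by apply: leq_ltn_trans lrp (leq_trans pY ya).
by rewrite ltn_add2r ltnNge (ltnW al).
Qed.

Let Pn := P ++ map (fun j => (dsub j r, j)) js.

Lemma memPn x y : ((x, y) \in Pn) = ((x, y) \in P) || ((y \in js) && (x == dsub y r)).
Proof.
rewrite mem_cat; congr orb; apply/mapP/andP => [[j jj [-> ->]]|[yj /eqP ->]].
  by rewrite jj eqxx.
by exists y.
Qed.

Lemma mapsndPn : map snd Pn = C ++ js.
Proof. by rewrite map_cat -map_comp map_id. Qed.

Lemma dsub_add s : s \in js -> (dsub s r + r)%N = s.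
Proof. by move=> sj; rewrite dsubE subnK // js_ge. Qed.

Lemma ord_neq_lt (q s : 'I_m) : q != s -> (q <= s)%N -> (q < s)%N.
Proof. by move=> qs qs'; rewrite ltn_neqAle qs' andbT; apply: contra qs => /eqP E; apply/eqP/val_inj. Qed.

Lemma newI3 s (q : 'I_m) : s \in js -> (q < s)%N -> D (dsub s r) q != 0 -> q \in C.
Proof.
move=> sj qs nz; apply: contraT => qC; have [aq _] := I0 H nz.
by move: nz; rewrite (I5 H aq) ?eqxx // dsub_add.
Qed.

Lemma step_upd : inv r.+1 (invmx T *m D *m T) Pn.
Proof.
set D' := invmx T *m D *m T.
have oldrow : forall a j0, (a, j0) \in P -> forall q, D' a q = D a q.
  move=> a j0 aP q; rewrite /D' rowD' ?(m2 aP) //; apply: (good_row_same gT) => l lj lq.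
  case: (eqVneq (D a l) 0) => // nz.
  have lC := js_notC lj.
  case: (eqVneq l j0) => [lj0|lj0]; first by move: lC; rewrite lj0 (inC aP).
  by move: lC; rewrite (I3 H aP lj0 nz).
have newrow : forall s q, s \in js -> D' (dsub s r) q = if (s < q)%N then 0 else D (dsub s r) q.
  by move=> s0 q sj; rewrite /D' rowD' ?m1 // R3.
have I4old : forall j q, j \in C -> D' j q = 0.
  move=> j q jC; rewrite /D' rowD'; last by apply: contraT; rewrite negbK => /js_notC; rewrite jC.
  by rewrite mxE big1 // => l _; rewrite (I4 H _ jC) mul0r.
constructor.
- exact: patt_conj (I0 H).
- exact: sq_conj (I1 H).
- move=> a j; rewrite memPn => /orP[aP|/andP[jj /eqP ->]].
    by rewrite (oldrow _ _ aP) (I2 H aP).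
  by rewrite newrow // ltnn js_nz.
- move=> a j q; rewrite memPn mapsndPn mem_cat => /orP[aP|/andP[jj /eqP ->]] qj nz.
    by move: nz; rewrite (oldrow _ _ aP) => /(I3 H aP qj) ->.
  move: nz; rewrite newrow //; case: ltnP => [_|qs]; first by rewrite eqxx.
  by move=> nz; rewrite (newI3 jj (ord_neq_lt qj qs) nz).
- move=> j q; rewrite mapsndPn mem_cat => /orP[jC|jj]; first exact: I4old.
  have h : (D' *m D') (dsub j r) q = 0 by rewrite /D' sq_conj ?(I1 H) // mxE.
  move: h; rewrite mxE (bigD1 j) //= big1 ?addr0.
    move/eqP; rewrite mulf_eq0 newrow // ltnn (negbTE (js_nz jj)) /=.
    by move/eqP.
  move=> l lj; case: (eqVneq (D' (dsub j r) l) 0) => [->|nz]; first by rewrite mul0r.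
  move: (nz); rewrite newrow //; case: ltnP => [_|lsj]; first by rewrite eqxx.
  by move=> nz'; rewrite I4old ?mulr0 // (newI3 jj (ord_neq_lt lj lsj) nz').
- move=> a q aq qar; rewrite mapsndPn mem_cat negb_or => /andP[qC qj].
  rewrite /D' -mulmxA; apply: (good_left_zero gI) => l al.
  apply: DT_K5 => //; apply: leq_trans (leq_add al (leqnn r)).
  by rewrite -ltnS -addnS.
- move=> x y q; rewrite memPn => /orP[xP|/andP[yj /eqP ->]] xq.
    rewrite /D' -mulmxA; apply: (good_left_zero gI) => l ql.
    apply: (DT_K7 (a := x)); [by move=> l0; apply: (I7 H xP)| exact: ltnW (I8 H xP)| exact: leq_trans xq ql].
  rewrite /D' -mulmxA; apply: (good_left_zero gI) => l ql.
  apply: (DT_K7 (a := dsub y r)); [by move=> l' hl'; apply: col_js_below| by rewrite dsub_add| exact: leq_trans xq ql].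
- move=> x y; rewrite memPn => /orP[xP|/andP[yj /eqP ->]].
    by rewrite addnS ltnS ltnW // (I8 H xP).
  by rewrite addnS ltnS dsub_add.
Qed.

Lemma step_noupd : ~~ ((r <= m - 2)%N && (js != [::])) -> (r <= m.-1)%N -> inv r.+1 D Pn.
Proof.
move=> hc rm.
have big : forall s, s \in js -> forall q : 'I_m, (q <= s)%N.
  move=> s sj q; have jn : js != [::] by apply/eqP => E; move: sj; rewrite E.
  move: hc; rewrite jn andbT -ltnNge => h.
  have a1 := js_ge sj; have a2 := ltn_ord q; have a3 := ltn_ord s; move: rm.
  rewrite -subn1; lia.
constructor.
- exact: I0 H.
- exact: I1 H.
- move=> a j; rewrite memPn => /orP[aP|/andP[jj /eqP ->]]; [exact: (I2 H aP) | exact: js_nz].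
- move=> a j q; rewrite memPn mapsndPn mem_cat => /orP[aP|/andP[jj /eqP ->]] qj nz.
    by rewrite (I3 H aP qj nz).
  by rewrite (newI3 jj (ord_neq_lt qj (big _ jj q)) nz).
- move=> j q; rewrite mapsndPn mem_cat => /orP[jC|jj]; first exact: (I4 H _ jC).
  by apply: strict; apply: big.
- move=> a q aq qar; rewrite mapsndPn mem_cat negb_or => /andP[qC qj].
  by apply: D_K5 => //; rewrite -ltnS -addnS.
- move=> x y q; rewrite memPn => /orP[xP|/andP[yj /eqP ->]] xq.
    exact: (I7 H xP).
  exact: col_js_below.
- move=> x y; rewrite memPn => /orP[xP|/andP[yj /eqP ->]].
    by rewrite addnS ltnS ltnW // (I8 H xP).
  by rewrite addnS ltnS dsub_add.
Qed.

End Step.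
End Inv.

Section Run.
Variables (F : fieldType) (m : nat) (blk : 'I_m -> nat).

Lemma inv_step r (D : 'M[F]_m) P : inv blk r D P -> (1 <= r)%N -> (r <= m.-1)%N ->
  inv blk r.+1 (rca_step (D, P) r).1 (rca_step (D, P) r).2.
Proof.
move=> H r1 rm; rewrite /rca_step /=.
case: ifP => [_|/negbT hc]; [exact: step_upd | exact: step_noupd].
Qed.

Definition stn (D : 'M[F]_m) n := foldl (@rca_step F m) (D, [::]) (iota 1 n).

Lemma stnS D n : stn D n.+1 = rca_step (stn D n) n.+1.
Proof. by rewrite /stn -[n.+1]addn1 iotaD foldl_cat /= addnC. Qed.

Lemma inv_run (D : 'M[F]_m) n : patt blk D -> D *m D = 0 -> (n <= m.-1)%N ->
  inv blk n.+1 (stn D n).1 (stn D n).2.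
Proof.
move=> pD DD; elim: n => [_|n IH hn].
  constructor => //= a q aq; rewrite addn1 ltnS => /(leq_trans aq); by rewrite ltnn.
rewrite stnS; case E: (stn D n) => [D0 P0]; apply: inv_step => //.
by move: (IH (ltnW hn)); rewrite E.
Qed.

Lemma step_sub (st : rca_state F m) l : {subset st.2 <= (foldl (@rca_step F m) st l).2}.
Proof.
elim: l st => [|r l IH] st x xs //=.
by apply: IH; rewrite /rca_step /= mem_cat xs.
Qed.

Lemma stn_sub (D : 'M[F]_m) n n' : (n <= n')%N -> {subset (stn D n).2 <= (stn D n').2}.
Proof.
move=> nn'; rewrite /stn -(subnKC nn') iotaD foldl_cat; exact: step_sub.
Qed.

End Run.


Section Sim.
Variables (F : fieldType) (m : nat) (blk : 'I_m -> nat) (k : nat) (Jp : {set 'I_m})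
  (Pf : seq ('I_m * 'I_m)).
Hypothesis k1 : (1 <= k)%N.
Hypothesis HJ : forall i, blk i = k.-1 -> (i \in Jp) = (i \in map snd Pf).
Hypothesis HPf : forall p, p \in Pf -> p.1 \notin map snd Pf.

Definition mask (M : 'M[F]_m) := bs_input blk M k Jp.
Definition fk (P : seq ('I_m * 'I_m)) := [seq p <- P | blk p.2 == k].

Lemma maskE M i j : mask M i j =
  if [&& blk i == k.-1, i \notin Jp & blk j == k] then M i j else 0.
Proof. by rewrite mxE. Qed.

Lemma mem_fk j P : (j \in map snd (fk P)) = (blk j == k) && (j \in map snd P).
Proof.
apply/mapP/andP => [[p pP ->]|[bj /mapP [p pP pE]]].
  by move: pP; rewrite mem_filter => /andP[-> pP]; split => //; apply: map_f.
by exists p => //; rewrite mem_filter -pE bj.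
Qed.

Lemma kk : (k.-1 == k) = false.
Proof. by case: k k1 => // n _ /=; apply/negbTE; rewrite neq_ltn ltnSn. Qed.

Lemma patt_blk (D : 'M[F]_m) i j : patt blk D -> D i j != 0 -> blk i = k.-1 -> blk j = k.
Proof.
move=> pD /pD [_ [h1 h2]] bi; move: h2 k1 h1; rewrite bi.
by case: (blk j) => // a; case: k => // b /= ->.
Qed.

Section Step.
Variables (r : nat) (D : 'M[F]_m) (P : seq ('I_m * 'I_m)).
Hypothesis (H : inv blk r D P) (r1 : (1 <= r)%N).
Let js := marked_cols r (D, P).
Hypothesis Hsub : forall j, j \in js -> (dsub j r, j) \in Pf.

Lemma js_mapPf j : j \in js -> j \in map snd Pf.
Proof. by move=> jj; apply/mapP; exists (dsub j r, j) => //; apply: Hsub. Qed.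

Lemma row_clean j : j \in js -> dsub j r \notin Jp \/ blk (dsub j r) != k.-1.
Proof.
move=> jj; case: (eqVneq (blk (dsub j r)) k.-1) => [b|]; last by right.
by left; rewrite HJ // (HPf (Hsub jj)).
Qed.

Lemma marked_sim : marked_cols r (mask D, fk P) = [seq j <- js | blk j == k].
Proof.
rewrite /js /marked_cols -filter_predI; apply: eq_filter => j /=.
rewrite mem_fk maskE /=.
case: (eqVneq (blk j) k) => bj; last first.
  by rewrite !andbF /= eqxx /= !andbF.
rewrite andbT /=.
case rj: (r <= j)%N => //=; case jC: (j \in map snd P); rewrite /= ?andbF //.
case: (eqVneq (D (dsub j r) j) 0) => [->|nz]; first by rewrite if_same eqxx.
have jj : j \in js by rewrite /js markedP // rj nz jC.
have ba : blk (dsub j r) = k.-1.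
  by have [_ [h1 h2]] := I0 H nz; rewrite h2 bj.
have [cl|]:= row_clean jj; last by rewrite ba eqxx.
by rewrite ba eqxx cl nz.
Qed.

Let jsk := [seq j <- js | blk j == k].

Lemma Trs_sim j : j \in jsk -> Trs (mask D) r j = Trs D r j.
Proof.
rewrite mem_filter => /andP[/eqP bj jj].
have nz := js_nz jj.
have ba : blk (dsub j r) = k.-1 by have [_ [h1 h2]] := I0 H nz; rewrite h2 bj.
have cl : dsub j r \notin Jp by case: (row_clean jj) => //; rewrite ba eqxx.
have row : forall q, mask D (dsub j r) q = D (dsub j r) q.
  move=> q; rewrite maskE ba eqxx cl /=; case: (eqVneq (blk q) k) => // bq.
  case: (eqVneq (D (dsub j r) q) 0) => // nzq.
  by move: bq; rewrite (patt_blk (I0 H) nzq ba) eqxx.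
by rewrite /Trs; congr (_ - _); apply: eq_bigr => q _; rewrite !row.
Qed.

Lemma Tprod_sim : Tprod (mask D) r jsk = Tprod D r jsk.
Proof.
have : {subset jsk <= jsk} by [].
elim: {-2}jsk => [//|j s IH] sub /=.
rewrite IH ?Trs_sim //; first by apply: sub; rewrite inE eqxx.
by move=> x xs; apply: sub; rewrite inE xs orbT.
Qed.

Lemma Tprod_agree (s : seq 'I_m) (l j : 'I_m) : blk l = k -> blk j = k ->
  Tprod D r [seq x <- s | blk x == k] l j = Tprod D r s l j.
Proof.
elim: s l j => [//|x s IH] l j bl bj /=.
have [G1 _ G3] := @Tfac_good F m blk (coef D r x) x (fun l0 => @coef_blk F m blk D r x l0 (I0 H)).
case: (eqVneq (blk x) k) => [bx|bx] /=.
  rewrite !mxE; apply: eq_bigr => a _.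
  case: (eqVneq (Trs D r x l a) 0) => [->|nz]; first by rewrite !mul0r.
  have ba : blk a = k by move: nz; rewrite TrsE => /G3 <-.
  by rewrite IH.
rewrite IH // row_unit_mul // => a; rewrite TrsE G1 //=.
by apply: contra bx => /eqP <-; rewrite bl.
Qed.

Lemma sim_mx : (r <= m - 2)%N -> js != [::] ->
  (if (r <= m - 2)%N && (jsk != [::]) then
     invmx (Tprod (mask D) r jsk) *m mask D *m Tprod (mask D) r jsk else mask D)
  = mask (invmx (Tprod D r js) *m D *m Tprod D r js).
Proof.
move=> rm jn.
have -> : (if (r <= m - 2)%N && (jsk != [::]) then
     invmx (Tprod (mask D) r jsk) *m mask D *m Tprod (mask D) r jsk else mask D)
  = invmx (Tprod D r jsk) *m mask D *m Tprod D r jsk.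
  rewrite Tprod_sim rm /=; case: (eqVneq jsk [::]) => [E|] //=.
  by rewrite E /= invmx1 mul1mx mulmx1.
have gTk := good_Tprod r jsk (I0 H); have gIk := good_invT r jsk (I0 H).
have gT := good_Tprod r js (I0 H); have gI := good_invT r js (I0 H).
apply/matrixP => i j; rewrite maskE.
case: ifP => [/and3P[/eqP bi ci /eqP bj]|cf].
  rewrite -!mulmxA [LHS]row_unit_mul; last first.
    move=> a; have [h _ _] := gIk; apply: h; rewrite /= mem_filter bi kk.
    done.
  rewrite [RHS]row_unit_mul; last first.
    move=> a; have [h _ _] := gI; apply: h; apply/negP => ij.
    by move: ci; rewrite HJ // (js_mapPf ij).
  rewrite !mxE; apply: eq_bigr => l _; rewrite maskE bi eqxx ci /=.
  case: (eqVneq (blk l) k) => [bl|bl].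
    by rewrite Tprod_agree.
  case: (eqVneq (D i l) 0) => [->|nz]; first by rewrite !mul0r.
  by move: bl; rewrite (patt_blk (I0 H) nz bi) eqxx.
rewrite -mulmxA mxE big1 // => a _.
case: (eqVneq ((mask D *m Tprod D r jsk) a j) 0) => [->|nz]; first by rewrite mulr0.
case: (eqVneq (invmx (Tprod D r jsk) i a) 0) => [->|nzi]; first by rewrite mul0r.
exfalso; have [l [h1 h2]] := mulmx_nz_ex nz.
move: h1; rewrite maskE; case: ifP => [/and3P[/eqP ba ca /eqP bl] _|]; last by rewrite eqxx.
have [G1 _ G3] := gIk; have [_ _ G3'] := gTk.
have bj : blk j = k by rewrite -(G3' _ _ h2).
have bi : blk i = k.-1 by rewrite (G3 _ _ nzi).
case: (eqVneq i a) => [ia|ia].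
  by move: cf; rewrite ia ba eqxx ca bj eqxx.
have : i \in jsk.
  apply: contraT => ij; move: nzi; rewrite G1 //.
  by rewrite (negbTE ia) eqxx.
by rewrite mem_filter bi kk.
Qed.

Lemma sim_step : rca_step (mask D, fk P) r =
  (mask (rca_step (D, P) r).1, fk (rca_step (D, P) r).2).
Proof.
rewrite /rca_step /= marked_sim -/js -/jsk.
congr (_, _); last first.
  by rewrite /fk filter_cat filter_map.
case E: ((r <= m - 2)%N && (js != [::])).
  by move/andP: E => [rm jn]; exact: sim_mx.
have -> : ((r <= m - 2)%N && (jsk != [::])) = false.
  apply: negbTE; move/negbT: E; apply: contra => /andP[-> jn] /=.
  by apply: contra jn => /eqP E; rewrite /jsk E.
done.
Qed.

End Step.
End Sim.


Section Final.
Variables (F : fieldType) (m b : nat) (blk : 'I_m -> nat) (D : 'M[F]_m).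
Hypothesis HC : connection_matrix b blk D.

Lemma pD : patt blk D.
Proof. by case: HC => _ [_ [_ h]]. Qed.
Lemma DD : D *m D = 0.
Proof. by case: HC => _ [_ [h _]]. Qed.

Let Pf := (stn D (m - 1)).2.

Lemma finv : inv blk (m - 1).+1 (stn D (m - 1)).1 Pf.
Proof. by apply: inv_run; [exact: pD | exact: DD | rewrite subn1]. Qed.

Lemma HPf p : p \in Pf -> p.1 \notin map snd Pf.
Proof.
case: p => a j /= aP; apply/negP => aC.
by move: (I2 finv aP); rewrite (I4 finv _ aC) eqxx.
Qed.

Lemma colblk j : j \in map snd Pf -> (1 <= blk j)%N.
Proof.
move/mapP => [[a j'] aP ->] /=; have := I2 finv aP.
by move/(I0 finv) => [_ [h _]].
Qed.

Lemma sim_run k (Jp : {set 'I_m}) : (1 <= k)%N ->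
  (forall i, blk i = k.-1 -> (i \in Jp) = (i \in map snd Pf)) ->
  forall n, (n <= m - 1)%N ->
  stn (mask blk k Jp D) n = (mask blk k Jp (stn D n).1, fk blk k (stn D n).2).
Proof.
move=> k1 HJ; elim=> [//|n IH hn].
rewrite !stnS IH ?(ltnW hn) //.
case E: (stn D n) => [D0 P0].
apply: (sim_step (Pf := Pf)) => //.
- exact: HPf.
- have := @inv_run F m blk D n pD DD; rewrite E; apply; rewrite -subn1; exact: ltnW.
- move=> j jj; apply: (stn_sub (n := n.+1)) => //.
  by rewrite stnS E /rca_step /= mem_cat; apply/orP; right; apply: map_f.
Qed.

Lemma cols_char k : (1 <= k)%N -> bs_cols blk D k = [set j | (j \in map snd Pf) && (blk j == k)].
Proof.
elim: k => [//|k IH] _ /=.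
have HJ : forall i, blk i = k.+1.-1 -> (i \in bs_cols blk D k) = (i \in map snd Pf).
  move=> i /= bi; case: k IH bi => [_ bi|k IH bi].
    rewrite /= in_set0; apply/esym/negP => /colblk; by rewrite bi.
  by rewrite IH // in_set bi eqxx andbT.
apply/setP => j; rewrite !in_set.
rewrite /rca_run.
have := sim_run (k := k.+1) (isT : (1 <= k.+1)%N) HJ (leqnn (m - 1)).
rewrite /stn /mask => ->; by rewrite /= mem_fk andbC.
Qed.

Lemma HJk k : (1 <= k)%N -> forall i, blk i = k.-1 -> (i \in bs_cols blk D k.-1) = (i \in map snd Pf).
Proof.
case: k => [//|k] _ i /= bi; case: k bi => [bi|k bi].
  rewrite /= in_set0; apply/esym/negP => /colblk; by rewrite bi.
by rewrite cols_char // in_set bi eqxx andbT.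
Qed.

Lemma run_bs k : (1 <= k)%N ->
  rca_run (bs_matrix blk D k) = (mask blk k (bs_cols blk D k.-1) (stn D (m - 1)).1, fk blk k Pf).
Proof.
move=> k1; have := sim_run k1 (HJk k1) (leqnn (m - 1)).
by rewrite /stn /rca_run /bs_matrix /mask.
Qed.

Lemma big_setU_mem (T : finType) (s : seq nat) (G : nat -> {set T}) x :
  (x \in \big[@setU T/set0]_(k <- s) G k) = has (fun k => x \in G k) s.
Proof.
elim: s => [|a s IH]; first by rewrite big_nil in_set0.
by rewrite big_cons in_setU IH.
Qed.

End Final.

Unset Implicit Arguments.

Theorem mainTheorem14 (F : fieldType) (m b : nat) (blk : 'I_m -> nat)
    (D : 'M[F]_m) :
  connection_matrix b blk D ->
  (forall k : nat, (1 <= k <= b)%N ->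
     forall i j : 'I_m, blk i = k.-1 -> blk j = k ->
       rca_final D i j = rca_final (bs_matrix blk D k) i j) /\
  rca_pivots D = \bigcup_(1 <= k < b.+1) rca_pivots (bs_matrix blk D k).
Proof.
move=> HC; split.
  move=> k /andP[k1 kb] i j bi bj.
  rewrite /rca_final (run_bs HC) // /= maskE bi bj !eqxx /=.
  case: ifP => // /negbT; rewrite /= andbT negbK => iJ.
  rewrite (HJk HC k1 bi) in iJ.
  by rewrite (I4 (finv HC) _ iJ).
apply/setP => p; rewrite /rca_pivots in_set big_setU_mem.
apply/idP/hasP => [pP|[k kin]].
  exists (blk p.2).
    rewrite mem_index_iota (colblk HC) /=; last by apply/mapP; exists p.
    by case: HC => [[h _] _]; rewrite ltnS h.
  rewrite (run_bs HC) ?(colblk HC) //=; last by apply/mapP; exists p.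
  by rewrite in_set mem_filter eqxx.
have k1 : (1 <= k)%N by move: kin; rewrite mem_index_iota => /andP[].
by rewrite (run_bs HC) // in_set /= mem_filter => /andP[_].
Qed.
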